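(* Let $\mathfrak d=D(\mathfrak g,\mathfrak h)$ be a double extension (defined in the context), and suppose $\mathfrak h=\hat{\mathfrak h}\dotplus\check{\mathfrak h}$ as a vector space, where $\hat{\mathfrak h}$ is a Lie subalgebra of $\mathfrak h$. Choose bases $\{\hat H_{\hat\alpha}\}$ of $\hat{\mathfrak h}$ and $\{\check H_{\check\alpha}\}$ of $\check{\mathfrak h}$, and write the structure constants of $\mathfrak h$ and of its action on $\mathfrak g$ in this combined basis (so e.g. $f_{\hat\alpha\hat\beta}{}^{\check\gamma}=0$). Let $\{\hat H^{\hat\alpha},\check H^{\check\alpha}\}$ be the dual basis of $\mathfrak h^*$. Define the linear maps $T(\epsilon)$, $0<\epsilon\le 1$, on $\mathfrak d$ by $T(\epsilon)\check H_{\check\alpha}=\epsilon\,\check H_{\check\alpha}$, $T(\epsilon)\check H^{\check\alpha}=\epsilon^{-1}\check H^{\check\alpha}$, and $T(\epsilon)$ equal to the identity on $\mathfrak g$, on $\hat{\mathfrak h}$ and on $\operatorname{span}\{\hat H^{\hat\alpha}\}$. Then the limit $[x,y]_T=\lim_{\epsilon\to0}T(\epsilon)^{-1}[T(\epsilon)x,T(\epsilon)y]$ exists for all $x,y\in\mathfrak d$, and the contracted Lie algebra has the following nonzero brackets: $[G_i,G_j]=f_{ij}{}^kG_k+f_{\hat\alpha i}{}^k\Omega^{\mathfrak g}_{kj}\hat H^{\hat\alpha}$, $[\check H_{\check\alpha},\check H^{\check\beta}]=-f_{\check\alpha\hat\gamma}{}^{\check\beta}\hat H^{\hat\gamma}$,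 $[\hat H_{\hat\alpha},G_i]=f_{\hat\alpha i}{}^jG_j$, $[\hat H_{\hat\alpha},\check H_{\check\beta}]=f_{\hat\alpha\check\beta}{}^{\check\gamma}\check H_{\check\gamma}$, $[\hat H_{\hat\alpha},\check H^{\check\beta}]=-f_{\hat\alpha\check\gamma}{}^{\check\beta}\check H^{\check\gamma}$, $[\hat H_{\hat\alpha},\hat H_{\hat\beta}]=f_{\hat\alpha\hat\beta}{}^{\hat\gamma}\hat H_{\hat\gamma}$, $[\hat H_{\hat\alpha},\hat H^{\hat\beta}]=-f_{\hat\alpha\hat\gamma}{}^{\hat\beta}\hat H^{\hat\gamma}$ (in particular $[\check H_{\check\alpha},G_i]=0$ and $[\check H_{\check\alpha},\check H_{\check\beta}]=0$). Moreover, the symmetric bilinear form with nonzero entries $\langle G_i,G_j\rangle=\Omega^{\mathfrak g}_{ij}$, $\langle \hat H_{\hat\alpha},\hat H_{\hat\beta}\rangle=h_{\hat\alpha\hat\beta}$, $\langle\hat H_{\hat\alpha},\hat H^{\hat\beta}\rangle=\delta_{\hat\alpha}^{\hat\beta}$, $\langle\check H_{\check\alpha},\check H^{\check\beta}\rangle=\delta_{\check\alpha}^{\check\beta}$ (the $\epsilon\to0$ limit of the form $\langle T(\epsilon)x,T(\epsilon)y\rangle$) is an invariant metric on the contracted algebra, and the contracted algebra is a double extension $D(\mathfrak g\oplus D(0,\check{\mathfrak h}_T),\hat{\mathfrak h}_T)$, where $\check{\mathfrak h}_T$ is the abelian Lie algebra on the vector space $\check{\mathfrak h}$.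
   Context: An invariant metric on a real Lie algebra is a symmetric, nondegenerate bilinear form $\langle\cdot,\cdot\rangle$ with $\langle[Z,X],Y\rangle+\langle X,[Z,Y]\rangle=0$ for all $X,Y,Z$. Double extension (Medina–Revoy): let $\mathfrak g$ be a Lie algebra with basis $\{G_i\}$, brackets $[G_i,G_j]=f_{ij}{}^kG_k$ and invariant metric $\Omega^{\mathfrak g}_{ij}$; let $\mathfrak h$ be a Lie algebra with basis $\{H_\alpha\}$, $[H_\alpha,H_\beta]=f_{\alpha\beta}{}^\gamma H_\gamma$, acting on $\mathfrak g$ by derivations $H_\alpha\cdot G_i=f_{\alpha i}{}^jG_j$ that are antisymmetric with respect to $\Omega^{\mathfrak g}$ ($f_{\alpha i}{}^k\Omega^{\mathfrak g}_{kj}+f_{\alpha j}{}^k\Omega^{\mathfrak g}_{ki}=0$). Let $\{H^\alpha\}$ be the dual basis of $\mathfrak h^*$. The double extension $D(\mathfrak g,\mathfrak h)$ is the vector space $\mathfrak g\dotplus\mathfrak h\dotplus\mathfrak h^*$ with brackets $[G_i,G_j]=f_{ij}{}^kG_k+f_{\alpha i}{}^k\Omega^{\mathfrak g}_{kj}H^\alpha$, $[H_\alpha,G_i]=f_{\alpha i}{}^jG_j$, $[H_\alpha,H_\beta]=f_{\alpha\beta}{}^\gamma H_\gamma$, $[H_\alpha,H^\beta]=-f_{\alpha\gamma}{}^\beta H^\gamma$, $[H^\alpha,G_j]=[H^\alpha,H^\beta]=0$, and invariant metric $\langle G_i,G_j\rangle=\Omega^{\mathfrak g}_{ij}$, $\langle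 H_\alpha,H_\beta\rangle=h_{\alpha\beta}$, $\langle H_\alpha,H^\beta\rangle=\delta_\alpha^\beta$, all other entries zero, where $h_{\alpha\beta}$ is any (possibly degenerate) invariant symmetric bilinear form on $\mathfrak h$. $D(0,\mathfrak h)$ denotes the double extension of the trivial Lie algebra, i.e. $\mathfrak h^*\rtimes\mathfrak h$ with the coadjoint action. *)

(* Defs.v *)
From HB Require Import structures.
From mathcomp Require Import all_boot all_order all_algebra.
Set Implicit Arguments. Unset Strict Implicit. Unset Printing Implicit Defensive.
Import Order.TTheory GRing.Theory Num.Theory.
Local Open Scope ring_scope.

(* A basis is indexed by a finite type I; c i j k = coefficient of e_k in [e_i,e_j]. *)

Definition br (R : realFieldType) (I : finType) (c : I -> I -> I -> R)
  (x y : I -> R) : I -> R :=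
  fun k => \sum_i \sum_j x i * y j * c i j k.

Definition bilin (R : realFieldType) (I : finType) (B : I -> I -> R)
  (x y : I -> R) : R :=
  \sum_i \sum_j x i * B i j * y j.

Definition lie_consts (R : realFieldType) (I : finType) (c : I -> I -> I -> R) : Prop :=
  (forall i j k, c i j k = - c j i k) /\
  (forall i j l m,
     \sum_k (c i j k * c k l m + c j l k * c k i m + c l i k * c k j m) = 0).

Definition sym_form (R : realFieldType) (I : finType) (B : I -> I -> R) : Prop :=
  forall i j, B i j = B j i.

Definition nondeg (R : realFieldType) (I : finType) (B : I -> I -> R) : Prop :=
  forall x : I -> R, (forall j, \sum_i x i * B i j = 0) -> forall i, x i = 0.

Definition invariant_form (R : realFieldType) (I : finType)
  (c : I -> I -> I -> R) (B : I -> I -> R) : Prop :=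
  forall k i j, \sum_l (c k i l * B l j + c k j l * B i l) = 0.

Definition invariant_metric (R : realFieldType) (I : finType)
  (c : I -> I -> I -> R) (B : I -> I -> R) : Prop :=
  sym_form B /\ nondeg B /\ invariant_form c B.

(* fg, Om : Lie algebra g with invariant metric; fh : Lie algebra h;
   fa a i j : H_a . G_i = sum_j fa a i j G_j, an action of h on g by
   Om-antisymmetric derivations; hf : invariant symmetric (possibly
   degenerate) bilinear form on h. *)
Definition DE_data (R : realFieldType) (Ig Ih : finType)
  (fg : Ig -> Ig -> Ig -> R) (Om : Ig -> Ig -> R)
  (fh : Ih -> Ih -> Ih -> R) (fa : Ih -> Ig -> Ig -> R) (hf : Ih -> Ih -> R) : Prop :=
  lie_consts fg /\ invariant_metric fg Om /\ lie_consts fh /\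
      (forall a i j m, (\sum_k fg i j k * fa a k m)
          = (\sum_k fa a i k * fg k j m) + (\sum_k fa a j k * fg i k m)) /\
      (forall a b i m, (\sum_c fh a b c * fa c i m)
          = (\sum_k fa b i k * fa a k m) - (\sum_k fa a i k * fa b k m)) /\
      (forall a i j, \sum_k (fa a i k * Om k j + fa a j k * Om k i) = 0) /\
      (sym_form hf /\ invariant_form fh hf).

(* Basis of D(g,h) = g + h + h^* :
   inl (inl i) = G_i,  inl (inr a) = H_a,  inr a = H^a. *)
Definition DEidx (Ig Ih : finType) : finType := ((Ig + Ih) + Ih)%type.

Definition dext (R : realFieldType) (Ig Ih : finType)
  (fg : Ig -> Ig -> Ig -> R) (Om : Ig -> Ig -> R)
  (fh : Ih -> Ih -> Ih -> R) (fa : Ih -> Ig -> Ig -> R)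
  (x y z : DEidx Ig Ih) : R :=
  match x, y, z with
  | inl (inl i), inl (inl j), inl (inl k) => fg i j k
  | inl (inl i), inl (inl j), inr a => \sum_k fa a i k * Om k j
  | inl (inr a), inl (inl i), inl (inl j) => fa a i j
  | inl (inl i), inl (inr a), inl (inl j) => - fa a i j
  | inl (inr a), inl (inr b), inl (inr c) => fh a b c
  | inl (inr a), inr b, inr c => - fh a c b
  | inr b, inl (inr a), inr c => fh a c b
  | _, _, _ => 0
  end.

Definition dmetric (R : realFieldType) (Ig Ih : finType)
  (Om : Ig -> Ig -> R) (hf : Ih -> Ih -> R) (x y : DEidx Ig Ih) : R :=
  match x, y with
  | inl (inl i), inl (inl j) => Om i j
  | inl (inr a), inl (inr b) => hf a b
  | inl (inr a), inr b => (a == b)%:R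
  | inr b, inl (inr a) => (a == b)%:R
  | _, _ => 0
  end.

Definition dsum (R : realFieldType) (I1 I2 : finType)
  (c1 : I1 -> I1 -> I1 -> R) (c2 : I2 -> I2 -> I2 -> R)
  (x y z : (I1 + I2)%type) : R :=
  match x, y, z with
  | inl i, inl j, inl k => c1 i j k
  | inr i, inr j, inr k => c2 i j k
  | _, _, _ => 0
  end.

Definition dsum_form (R : realFieldType) (I1 I2 : finType)
  (B1 : I1 -> I1 -> R) (B2 : I2 -> I2 -> R) (x y : (I1 + I2)%type) : R :=
  match x, y with
  | inl i, inl j => B1 i j
  | inr i, inr j => B2 i j
  | _, _ => 0
  end.

(* g has basis G_i, i : 'I_n; h = hat h + check h with combined basis indexed by
   'I_p + 'I_q : inl a = hat H_a, inr a = check H_a. *)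
Definition Hidx (p q : nat) : finType := ('I_p + 'I_q)%type.
Definition Didx (n p q : nat) : finType := DEidx 'I_n (Hidx p q).

Definition Tscale (R : realFieldType) (n p q : nat) (eps : R) (z : Didx n p q) : R :=
  match z with
  | inl (inr (inr _)) => eps
  | inr (inr _) => eps^-1
  | _ => 1
  end.

Definition Tmap (R : realFieldType) (n p q : nat) (eps : R) (x : Didx n p q -> R) :
  Didx n p q -> R := fun z => Tscale eps z * x z.

Definition Tinv (R : realFieldType) (n p q : nat) (eps : R) (x : Didx n p q -> R) :
  Didx n p q -> R := fun z => x z / Tscale eps z.

Definition lim0plus (R : realFieldType) (f : R -> R) (L : R) : Prop :=
  forall e : R, 0 < e -> exists2 d : R, 0 < d &
    forall eps : R, 0 < eps -> eps < d -> `|f eps - L| < e.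

Definition contracted (R : realFieldType) (n p q : nat)
  (fg : 'I_n -> 'I_n -> 'I_n -> R) (Om : 'I_n -> 'I_n -> R)
  (fh : Hidx p q -> Hidx p q -> Hidx p q -> R) (fa : Hidx p q -> 'I_n -> 'I_n -> R)
  (x y z : Didx n p q) : R :=
  match x, y, z with
  | inl (inl i), inl (inl j), inl (inl k) => fg i j k
  | inl (inl i), inl (inl j), inr (inl a) => \sum_k fa (inl a) i k * Om k j
  | inl (inr (inr a)), inr (inr b), inr (inl c) => - fh (inr a) (inl c) (inr b)
  | inr (inr b), inl (inr (inr a)), inr (inl c) => fh (inr a) (inl c) (inr b)
  | inl (inr (inl a)), inl (inl i), inl (inl j) => fa (inl a) i j
  | inl (inl i), inl (inr (inl a)), inl (inl j) => - fa (inl a) i j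
  | inl (inr (inl a)), inl (inr (inr b)), inl (inr (inr c)) => fh (inl a) (inr b) (inr c)
  | inl (inr (inr b)), inl (inr (inl a)), inl (inr (inr c)) => - fh (inl a) (inr b) (inr c)
  | inl (inr (inl a)), inr (inr b), inr (inr c) => - fh (inl a) (inr c) (inr b)
  | inr (inr b), inl (inr (inl a)), inr (inr c) => fh (inl a) (inr c) (inr b)
  | inl (inr (inl a)), inl (inr (inl b)), inl (inr (inl c)) => fh (inl a) (inl b) (inl c)
  | inl (inr (inl a)), inr (inl b), inr (inl c) => - fh (inl a) (inl c) (inl b)
  | inr (inl b), inl (inr (inl a)), inr (inl c) => fh (inl a) (inl c) (inl b)
  | _, _, _ => 0
  end.

Definition contracted_form (R : realFieldType) (n p q : nat)
  (Om : 'I_n -> 'I_n -> R) (hf : Hidx p q -> Hidx p q -> R)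
  (x y : Didx n p q) : R :=
  match x, y with
  | inl (inl i), inl (inl j) => Om i j
  | inl (inr (inl a)), inl (inr (inl b)) => hf (inl a) (inl b)
  | inl (inr (inl a)), inr (inl b) => (a == b)%:R
  | inr (inl b), inl (inr (inl a)) => (a == b)%:R
  | inl (inr (inr a)), inr (inr b) => (a == b)%:R
  | inr (inr b), inl (inr (inr a)) => (a == b)%:R
  | _, _ => 0
  end.

(* g' = g (+) D(0, check h_T), check h_T abelian on 'I_q, D(0,-) with the zero
   form on check h_T (as forced by the contracted metric). *)
Definition gprime_idx (n q : nat) : finType := ('I_n + DEidx void 'I_q)%type.

Definition gprime (R : realFieldType) (n q : nat) (fg : 'I_n -> 'I_n -> 'I_n -> R) :
  gprime_idx n q -> gprime_idx n q -> gprime_idx n q -> R :=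
  dsum fg (dext (fun _ _ _ => 0) (fun _ _ => 0) (fun _ _ _ => 0) (fun _ _ _ => 0)).

Definition gprime_metric (R : realFieldType) (n q : nat) (Om : 'I_n -> 'I_n -> R) :
  gprime_idx n q -> gprime_idx n q -> R :=
  dsum_form Om (dmetric (fun _ _ => 0) (fun _ _ => 0)).

Definition hhat (R : realFieldType) (p q : nat) (fh : Hidx p q -> Hidx p q -> Hidx p q -> R) :
  'I_p -> 'I_p -> 'I_p -> R := fun a b c => fh (inl a) (inl b) (inl c).

(* Main.v *)
Require Import Defs.
From HB Require Import structures.
From mathcomp Require Import all_boot all_order all_algebra.
From mathcomp.algebra_tactics Require Import ring lra.
Set Implicit Arguments. Unset Strict Implicit. Unset Printing Implicit Defensive.
Import Order.TTheory GRing.Theory Num.Theory.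
Local Open Scope ring_scope.


Lemma sum_mul0l (R : realFieldType) (I : finType) (F : I -> R) : \sum_i 0 * F i = 0.
Proof. by rewrite big1 // => i _; rewrite mul0r. Qed.
Lemma sum_mul0r (R : realFieldType) (I : finType) (F : I -> R) : \sum_i F i * 0 = 0.
Proof. by rewrite big1 // => i _; rewrite mulr0. Qed.
Lemma sum_Nl (R : realFieldType) (I : finType) (F G : I -> R) :
  \sum_i (- F i) * G i = - \sum_i F i * G i.
Proof. by rewrite -sumrN; apply: eq_bigr => i _; rewrite mulNr. Qed.
Lemma sum_Nr (R : realFieldType) (I : finType) (F G : I -> R) :
  \sum_i F i * (- G i) = - \sum_i F i * G i.
Proof. by rewrite -sumrN; apply: eq_bigr => i _; rewrite mulrN. Qed.
Lemma sum_dr1 (R : realFieldType) (I : finType) (a : I) (F : I -> R) :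
  \sum_b F b * (a == b)%:R = F a.
Proof. rewrite (bigD1 a) //= eqxx mulr1 big1 ?addr0 // => b /negbTE; rewrite eq_sym => ->; by rewrite mulr0. Qed.
Lemma sum_dr2 (R : realFieldType) (I : finType) (a : I) (F : I -> R) :
  \sum_b F b * (b == a)%:R = F a.
Proof. rewrite (bigD1 a) //= eqxx mulr1 big1 ?addr0 // => b /negbTE ->; by rewrite mulr0. Qed.
Lemma sum_dl1 (R : realFieldType) (I : finType) (a : I) (F : I -> R) :
  \sum_b (a == b)%:R * F b = F a.
Proof. rewrite (bigD1 a) //= eqxx mul1r big1 ?addr0 // => b /negbTE; rewrite eq_sym => ->; by rewrite mul0r. Qed.
Lemma sum_dl2 (R : realFieldType) (I : finType) (a : I) (F : I -> R) :
  \sum_b (b == a)%:R * F b = F a.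
Proof. rewrite (bigD1 a) //= eqxx mul1r big1 ?addr0 // => b /negbTE ->; by rewrite mul0r. Qed.
Lemma sum_void (R : realFieldType) (F : void -> R) : \sum_i F i = 0.
Proof. by rewrite big1 // => -[]. Qed.

Ltac ssum1 := rewrite ?big_sumType /= ?big_split /= ?sum_mul0l ?sum_mul0r ?big1_eq
  ?sum_Nl ?sum_Nr ?sum_dr1 ?sum_dr2 ?sum_dl1 ?sum_dl2 ?sum_void
  ?mul0r ?mulr0 ?addr0 ?add0r ?oppr0 ?subr0 ?sub0r.
Ltac ssum := ssum1; ssum1.

Lemma dext_anti (R : realFieldType) (Ig Ih : finType) fg Om fh fa hf :
  @DE_data R Ig Ih fg Om fh fa hf -> forall i j k, dext fg Om fh fa i j k = - dext fg Om fh fa j i k.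
Proof.
move=> [[fgA _] [_ [[fhA _] [_ [_ [faO _]]]]]].
move=> [[i|a]|a] [[j|b]|b] [[k|c]|c] /=; rewrite ?oppr0 ?opprK //.
- have := faO c i j. move/eqP; rewrite big_split /= addr_eq0 => /eqP //.
Qed.

Lemma sumA (R : realFieldType) (I J : finType) (f : I -> I -> J -> R) (F : I -> R) x y :
  (forall a b c, f a b c = - f b a c) -> \sum_k F k * f k x y = - \sum_k F k * f x k y.
Proof. move=> fA; rewrite -sumrN; apply: eq_bigr => k _; by rewrite fA mulrN. Qed.
Lemma sumAl (R : realFieldType) (I J : finType) (f : I -> I -> J -> R) (F : J -> R) x y :
  (forall a b c, f a b c = - f b a c) -> \sum_k f x y k * F k = - \sum_k f y x k * F k.
Proof. move=> fA; rewrite -sumrN; apply: eq_bigr => k _; by rewrite fA mulNr. Qed.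
Lemma sumC (R : realFieldType) (I : finType) (F G : I -> R) :
  \sum_k F k * G k = \sum_k G k * F k.
Proof. by apply: eq_bigr => k _; rewrite mulrC. Qed.
Lemma sumOs (R : realFieldType) (I : finType) (Om : I -> I -> R) (F : I -> R) i :
  (forall a b, Om a b = Om b a) -> \sum_m F m * Om i m = \sum_m F m * Om m i.
Proof. by move=> Os; apply: eq_bigr => m _; rewrite Os. Qed.


Lemma sum_assoc (R : realFieldType) (I J : finType) (A : I -> R) (B : I -> J -> R) (C : J -> R) :
  \sum_m (\sum_k A k * B k m) * C m = \sum_k A k * (\sum_m B k m * C m).
Proof.
under eq_bigr => m _ do rewrite big_distrl.
rewrite exchange_big; apply: eq_bigr => k _; rewrite big_distrr; apply: eq_bigr => m _ /=.
by rewrite mulrA.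
Qed.

Lemma sum_swap3 (R : realFieldType) (I J : finType) (F : I -> J -> R) (G : J -> R) (B : I -> R) :
  \sum_c (\sum_k F c k * G k) * B c = \sum_k (\sum_c B c * F c k) * G k.
Proof.
under eq_bigr => c _ do rewrite big_distrl.
rewrite exchange_big; apply: eq_bigr => k _; rewrite big_distrl; apply: eq_bigr => c _ /=.
ring.
Qed.

Lemma symbil (R : realFieldType) (I : finType) (Om : I -> I -> R) (A B : I -> R) :
  (forall i j, Om i j = Om j i) ->
  \sum_k A k * (\sum_m B m * Om m k) = \sum_k B k * (\sum_m A m * Om m k).
Proof.
move=> Os.
under eq_bigr => k _ do rewrite big_distrr.
under [RHS]eq_bigr => k _ do rewrite big_distrr.
rewrite [RHS]exchange_big; apply: eq_bigr => k _; apply: eq_bigr => m _ /=.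
by rewrite Os; ring.
Qed.

Section Hard.
Variables (R : realFieldType) (Ig Ih : finType).
Variables (fg : Ig -> Ig -> Ig -> R) (Om : Ig -> Ig -> R) (fh : Ih -> Ih -> Ih -> R) (fa : Ih -> Ig -> Ig -> R).
Hypothesis fgA : forall i j k, fg i j k = - fg j i k.
Hypothesis fhA : forall i j k, fh i j k = - fh j i k.
Hypothesis Os : forall i j, Om i j = Om j i.
Hypothesis Oinv : forall k i j, \sum_l (fg k i l * Om l j + fg k j l * Om i l) = 0.
Hypothesis Der : forall a i j m, (\sum_k fg i j k * fa a k m)
          = (\sum_k fa a i k * fg k j m) + (\sum_k fa a j k * fg i k m).
Hypothesis Rep : forall a b i m, (\sum_c fh a b c * fa c i m)
          = (\sum_k fa b i k * fa a k m) - (\sum_k fa a i k * fa b k m).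
Hypothesis faO : forall a i j, \sum_k (fa a i k * Om k j + fa a j k * Om k i) = 0.
Hypothesis fhJ : forall i j l m,
     \sum_k (fh i j k * fh k l m + fh j l k * fh k i m + fh l i k * fh k j m) = 0.

Let Phi x y z := \sum_m fg x y m * Om m z.

Lemma omA a i j : \sum_k fa a i k * Om k j = - \sum_k fa a j k * Om k i.
Proof. by apply/eqP; rewrite -addr_eq0 -big_split /= faO. Qed.

Lemma PhiC x y z : Phi x y z = Phi z x y.
Proof.
rewrite /Phi; have := Oinv x y z; rewrite big_split /= => /eqP; rewrite addr_eq0 => /eqP ->.
rewrite (sumAl _ _ _ fgA) opprK; apply: eq_bigr => m _; by rewrite Os.
Qed.

Lemma Tlem d i j l : \sum_k fg i j k * (\sum_m fa d k m * Om m l)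
   = \sum_k fa d i k * Phi k j l + \sum_k fa d j k * Phi i k l.
Proof.
rewrite -sum_assoc.
under eq_bigr => m _ do rewrite Der mulrDl.
by rewrite big_split /= !sum_assoc.
Qed.

Lemma Xlem d i j l : \sum_k fa d i k * Phi k j l
   = - \sum_m fg j l m * (\sum_k fa d m k * Om k i).
Proof.
under eq_bigr => k _ do rewrite PhiC PhiC /Phi.
under eq_bigr => k _ do rewrite big_distrr.
rewrite exchange_big -sumrN; apply: eq_bigr => m _ /=.
rewrite -mulrN -omA big_distrr; apply: eq_bigr => k _ /=.
rewrite Os; ring.
Qed.

Lemma cocycle d i j l :
  \sum_k fg i j k * (\sum_m fa d k m * Om m l) +
  \sum_k fg j l k * (\sum_m fa d k m * Om m i) +
  \sum_k fg l i k * (\sum_m fa d k m * Om m j) = 0.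
Proof.
have E : forall i j l, \sum_k fg i j k * (\sum_m fa d k m * Om m l) =
  - \sum_k fg j l k * (\sum_m fa d k m * Om m i)
  - \sum_k fg l i k * (\sum_m fa d k m * Om m j).
  move=> i' j' l'; rewrite Tlem Xlem.
  have -> : \sum_k fa d j' k * Phi i' k l' = \sum_k fa d j' k * Phi k l' i'.
    by apply: eq_bigr => k _; rewrite [Phi k l' i']PhiC.
  by rewrite Xlem.
rewrite E; lra.
Qed.

Lemma Klem a b i j :
  \sum_c (\sum_k fa c i k * Om k j) * fh b a c - \sum_k fa b j k * (\sum_m fa a k m * Om m i)
  + \sum_k fa b i k * (\sum_m fa a k m * Om m j) = 0.
Proof.
rewrite sum_swap3.
under eq_bigr => k _ do rewrite Rep mulrBl.
rewrite sumrB !sum_assoc.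
have W : \sum_k fa a i k * (\sum_m fa b k m * Om m j) = \sum_k fa b j k * (\sum_m fa a k m * Om m i).
  under eq_bigr => k _ do rewrite omA mulrN.
  under [RHS]eq_bigr => k _ do rewrite omA mulrN.
  by rewrite !sumrN symbil.
rewrite W; lra.
Qed.

Lemma HJ a b c d : - \sum_k fh a b k * fh k d c - \sum_k fh b k c * fh a d k
   + \sum_k fh a k c * fh b d k = 0.
Proof.
have := fhJ a b d c; rewrite !big_split /=.
have -> : \sum_k fh b d k * fh k a c = - \sum_k fh a k c * fh b d k.
  rewrite -sumrN; apply: eq_bigr => k _; rewrite (fhA k a c); ring.
have -> : \sum_k fh d a k * fh k b c = \sum_k fh b k c * fh a d k.
  apply: eq_bigr => k _; rewrite (fhA d a k) (fhA k b c); ring.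
lra.
Qed.

End Hard.


Lemma dext_jac (R : realFieldType) (Ig Ih : finType) fg Om fh fa hf :
  @DE_data R Ig Ih fg Om fh fa hf -> forall i j l m,
  \sum_k (dext fg Om fh fa i j k * dext fg Om fh fa k l m +
          dext fg Om fh fa j l k * dext fg Om fh fa k i m +
          dext fg Om fh fa l i k * dext fg Om fh fa k j m) = 0.
Proof.
move=> [[fgA fgJ] [[Os [Ond Oinv]] [[fhA fhJ] [Der [Rep [faO _]]]]]].
move=> [[i|a]|a] [[j|b]|b] [[l|c]|c] [[m|d]|d]; ssum.
all: try done.
- by have := fgJ i j l m; rewrite !big_split.
- exact: cocycle.
- have := Der c i j m; have := sumA (fa c j) i m fgA; lra.
- have := Klem Os Rep faO d c i j; lra.
- have := Der b l i m; have := sumA (fa b i) l m fgA; lra.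
- have := Klem Os Rep faO d b l i; lra.
- have := Rep b c i m; lra.
- have := Der a j l m; have := sumA (fa a l) j m fgA; lra.
- have := Klem Os Rep faO d a j l; lra.
- have := Rep c a j m; lra.
- have := Rep a b l m; lra.
- by have := fhJ a b c d; rewrite !big_split.
- have := HJ fhA fhJ a b c d; lra.
- have := HJ fhA fhJ c a b d; lra.
- have := HJ fhA fhJ b c a d; lra.
Qed.

Lemma dext_inv (R : realFieldType) (Ig Ih : finType) fg Om fh fa hf :
  @DE_data R Ig Ih fg Om fh fa hf -> invariant_form (dext fg Om fh fa) (dmetric Om hf).
Proof.
move=> [[fgA fgJ] [[Os [Ond Oinv]] [[fhA fhJ] [Der [Rep [faO [hs hinv]]]]]]].
move=> [[k|c]|c] [[i|a]|a] [[j|b]|b]; ssum.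
all: try done.
- by have := Oinv k i j; rewrite big_split.
- by rewrite (sumOs _ _ Os) addNr.
- by rewrite addNr.
- by have := faO c i j; rewrite big_split /= (sumOs _ _ Os).
- by have := hinv c a b; rewrite big_split.
- by rewrite subrr.
- by rewrite subrr.
- by rewrite fhA addNr.
Qed.

Lemma dmetric_sym (R : realFieldType) (Ig Ih : finType) (Om : Ig -> Ig -> R) (hf : Ih -> Ih -> R) :
  sym_form Om -> sym_form hf -> sym_form (dmetric Om hf).
Proof. by move=> Os hs [[i|a]|a] [[j|b]|b] //=; rewrite ?Os ?hs // eq_sym. Qed.

Lemma dmetric_nd (R : realFieldType) (Ig Ih : finType) (Om : Ig -> Ig -> R) (hf : Ih -> Ih -> R) :
  nondeg Om -> nondeg (dmetric Om hf).
Proof.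
move=> Ond x Hx.
have HH : forall b, x (inl (inr b)) = 0.
  by move=> b; have := Hx (inr b); ssum.
have HS : forall b, x (inr b) = 0.
  move=> b; have := Hx (inl (inr b)); ssum.
  by rewrite big1 ?add0r // => a _; rewrite HH mul0r.
have HG : forall i, x (inl (inl i)) = 0.
  apply: Ond => j; have := Hx (inl (inl j)); by ssum.
by move=> [[i|a]|a].
Qed.

Lemma DE_lie (R : realFieldType) (Ig Ih : finType) fg Om fh fa hf :
  @DE_data R Ig Ih fg Om fh fa hf -> lie_consts (dext fg Om fh fa).
Proof. move=> H; split; [exact: dext_anti H | exact: dext_jac H]. Qed.

Lemma DE_metric (R : realFieldType) (Ig Ih : finType) fg Om fh fa hf :
  @DE_data R Ig Ih fg Om fh fa hf -> invariant_metric (dext fg Om fh fa) (dmetric Om hf).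
Proof.
move=> H; have H' := H; move: H' => [_ [[Os [Ond _]] [_ [_ [_ [_ [hs _]]]]]]].
split; first exact: dmetric_sym.
split; first exact: dmetric_nd.
exact: dext_inv H.
Qed.


Lemma dsum_lie (R : realFieldType) (I1 I2 : finType) (c1 : I1 -> I1 -> I1 -> R) (c2 : I2 -> I2 -> I2 -> R) :
  lie_consts c1 -> lie_consts c2 -> lie_consts (dsum c1 c2).
Proof.
move=> [A1 J1] [A2 J2]; split.
  by move=> [i|i] [j|j] [k|k] /=; rewrite ?oppr0.
move=> [i|i] [j|j] [l|l] [m|m]; ssum; try done.
- by have := J1 i j l m; rewrite !big_split.
- by have := J2 i j l m; rewrite !big_split.
Qed.

Lemma dsum_metric (R : realFieldType) (I1 I2 : finType) (c1 : I1 -> I1 -> I1 -> R) (c2 : I2 -> I2 -> I2 -> R) B1 B2 :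
  invariant_metric c1 B1 -> invariant_metric c2 B2 -> invariant_metric (dsum c1 c2) (dsum_form B1 B2).
Proof.
move=> [S1 [N1 I1']] [S2 [N2 I2']]; split; [|split].
- by move=> [i|i] [j|j] /=.
- move=> x Hx.
  have H1 : forall i, x (inl i) = 0.
    by apply: N1 => j; have := Hx (inl j); ssum.
  have H2 : forall i, x (inr i) = 0.
    by apply: N2 => j; have := Hx (inr j); ssum.
  by move=> [i|i].
- move=> [k|k] [i|i] [j|j]; ssum; try done.
  + by have := I1' k i j; rewrite big_split.
  + by have := I2' k i j; rewrite big_split.
Qed.

Lemma dext0 (R : realFieldType) (Ig Ih : finType) u v w :
  @dext R Ig Ih (fun _ _ _ => 0 : R) (fun _ _ => 0) (fun _ _ _ => 0) (fun _ _ _ => 0) u v w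
  = 0 :> R.
Proof. by case: u => [[u|u]|u]; case: v => [[v|v]|v]; case: w => [[w|w]|w]; ssum. Qed.

Lemma dext0_lie (R : realFieldType) (Ig Ih : finType) :
  lie_consts (dext (fun _ _ _ => 0 : R) (fun _ _ => 0) (fun _ _ _ => 0) (fun _ _ _ => 0) : DEidx Ig Ih -> _).
Proof.
split; first by move=> *; rewrite !dext0 oppr0.
move=> *; apply: big1 => k _; by rewrite !dext0 !mul0r !addr0.
Qed.

Lemma dext0_metric (R : realFieldType) (Ih : finType) :
  invariant_metric (dext (fun _ _ _ => 0 : R) (fun _ _ => 0) (fun _ _ _ => 0) (fun _ _ _ => 0) : DEidx void Ih -> _)
     (dmetric (fun _ _ => 0) (fun _ _ => 0)).
Proof.
split; first exact: dmetric_sym.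
split; first by apply: dmetric_nd => x _ [].
by move=> *; apply: big1 => k _; rewrite !dext0 !mul0r !addr0.
Qed.

Lemma gprime_lie (R : realFieldType) n q (fg : 'I_n -> 'I_n -> 'I_n -> R) :
  lie_consts fg -> lie_consts (@gprime R n q fg).
Proof. move=> H; apply: dsum_lie => //; exact: dext0_lie. Qed.

Lemma gprime_met (R : realFieldType) n q (fg : 'I_n -> 'I_n -> 'I_n -> R) Om :
  invariant_metric fg Om -> invariant_metric (@gprime R n q fg) (@gprime_metric R n q Om).
Proof. move=> H; apply: dsum_metric => //; exact: dext0_metric. Qed.

Definition fa' (R : realFieldType) n p q (fa : Hidx p q -> 'I_n -> 'I_n -> R)
  (fh : Hidx p q -> Hidx p q -> Hidx p q -> R) (a : 'I_p) (u v : gprime_idx n q) : R :=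
  match u, v with
  | inl i, inl j => fa (inl a) i j
  | inr (inl (inr b)), inr (inl (inr c)) => fh (inl a) (inr b) (inr c)
  | inr (inr b), inr (inr c) => - fh (inl a) (inr c) (inr b)
  | _, _ => 0
  end.

Lemma fa'_der (R : realFieldType) (n p q : nat) (fg : 'I_n -> 'I_n -> 'I_n -> R) (fa : Hidx p q -> 'I_n -> 'I_n -> R) fh
  (Der : forall a i j m, (\sum_k fg i j k * fa a k m)
          = (\sum_k fa a i k * fg k j m) + (\sum_k fa a j k * fg i k m)) :
  forall a i j m, (\sum_k @gprime R n q fg i j k * fa' fa fh a k m)
          = (\sum_k fa' fa fh a i k * @gprime R n q fg k j m) + (\sum_k fa' fa fh a j k * @gprime R n q fg i k m).
Proof.
move=> a [i|[[v|b]|b]] [j|[[v'|b']|b']] [m|[[v''|c]|c]]; rewrite /gprime /=; ssum; try done.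
all: try by case: v. all: try by case: v'. all: try by case: v''.
all: try lra.
Qed.

Section CB.
Variables (R : realFieldType) (p q : nat) (fh : Hidx p q -> Hidx p q -> Hidx p q -> R).
Hypothesis fhA : forall i j k, fh i j k = - fh j i k.
Hypothesis fhJ : forall i j l m,
     \sum_k (fh i j k * fh k l m + fh j l k * fh k i m + fh l i k * fh k j m) = 0.
Hypothesis sub : forall a b c, fh (inl a) (inl b) (inr c) = 0.

Lemma Z1 (F : 'I_p -> R) a g : \sum_c F c * fh (inl c) (inl a) (inr g) = 0.
Proof. by apply: big1 => c _; rewrite sub mulr0. Qed.
Lemma Z2 (F : 'I_q -> R) a b : \sum_c fh (inl a) (inl b) (inr c) * F c = 0.
Proof. by apply: big1 => c _; rewrite sub mul0r. Qed.

Lemma CB a b c d :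
  \sum_(c0 < p) fh (inl a) (inl b) (inl c0) * fh (inl c0) (inr c) (inr d) =
  \sum_(i < q) fh (inl b) (inr c) (inr i) * fh (inl a) (inr i) (inr d) -
  \sum_(i < q) fh (inl a) (inr c) (inr i) * fh (inl b) (inr i) (inr d).
Proof.
have := fhJ (inl a) (inl b) (inr c) (inr d); ssum; rewrite !Z1 Z2.
have -> : \sum_i fh (inl b) (inr c) (inr i) * fh (inr i) (inl a) (inr d) =
   - \sum_i fh (inl b) (inr c) (inr i) * fh (inl a) (inr i) (inr d).
  by rewrite -sumrN; apply: eq_bigr => k _; rewrite (fhA (inr k)) mulrN.
have -> : \sum_i fh (inr c) (inl a) (inr i) * fh (inr i) (inl b) (inr d) =
   \sum_i fh (inl a) (inr c) (inr i) * fh (inl b) (inr i) (inr d).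
  by apply: eq_bigr => k _; rewrite (fhA (inr c)) (fhA (inr k)) mulrNN.
lra.
Qed.
End CB.

Lemma fa'_rep (R : realFieldType) (n p q : nat) (fa : Hidx p q -> 'I_n -> 'I_n -> R) fh
  (fhA : forall i j k, fh i j k = - fh j i k)
  (fhJ : forall i j l m,
     \sum_k (fh i j k * fh k l m + fh j l k * fh k i m + fh l i k * fh k j m) = 0)
  (Rep : forall a b i m, (\sum_c fh a b c * fa c i m)
          = (\sum_k fa b i k * fa a k m) - (\sum_k fa a i k * fa b k m))
  (sub : forall a b c, fh (inl a) (inl b) (inr c) = 0) :
  forall a b (i m : gprime_idx n q), (\sum_c hhat fh a b c * fa' fa fh c i m)
          = (\sum_k fa' fa fh b i k * fa' fa fh a k m) - (\sum_k fa' fa fh a i k * fa' fa fh b k m).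
Proof.
move=> a b [i|[[v|c]|c]] [m|[[v'|d]|d]]; rewrite /hhat /=; ssum; try done.
all: try by case: v. all: try by case: v'.
all: try lra.
- have := Rep (inl a) (inl b) i m; rewrite big_sumType /=.
  rewrite (_ : \sum_i0 fh (inl a) (inl b) (inr i0) * fa (inr i0) i m = 0) ?addr0 //.
  by apply: big1 => k _; rewrite sub mul0r.
- exact: CB.
- have := CB fhA fhJ sub a b d c; rewrite (sumC (fun i => fh (inl b) (inr i) (inr c))).
  rewrite (sumC (fun i => fh (inl a) (inr i) (inr c))); lra.
Qed.

Lemma fa'_O (R : realFieldType) (n p q : nat) (fa : Hidx p q -> 'I_n -> 'I_n -> R) fh Om
  (faO : forall a i j, \sum_k (fa a i k * Om k j + fa a j k * Om k i) = 0) :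
  forall a (i j : gprime_idx n q),
  \sum_k (fa' fa fh a i k * @gprime_metric R n q Om k j + fa' fa fh a j k * @gprime_metric R n q Om k i) = 0.
Proof.
move=> a [i|[[v|c]|c]] [j|[[v'|d]|d]]; rewrite /gprime_metric /=; ssum; try done.
all: try by case: v. all: try by case: v'.
all: try lra.
by have := faO (inl a) i j; rewrite big_split.
Qed.

Lemma hhat_lie (R : realFieldType) (p q : nat) (fh : Hidx p q -> Hidx p q -> Hidx p q -> R)
  (sub : forall a b c, fh (inl a) (inl b) (inr c) = 0) :
  lie_consts fh -> lie_consts (hhat fh).
Proof.
move=> [fhA fhJ]; split; first by move=> *; rewrite /hhat fhA.
move=> i j l m; rewrite /hhat; have := fhJ (inl i) (inl j) (inl l) (inl m).
rewrite big_sumType /= [X in _ + X]big1 ?addr0 //.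
by move=> k _; rewrite !sub !mul0r !addr0.
Qed.

Definition hf' (R : realFieldType) (p q : nat) (hf : Hidx p q -> Hidx p q -> R) (a b : 'I_p) : R :=
  hf (inl a) (inl b).

Lemma DE_g' (R : realFieldType) (n p q : nat)
  (fg : 'I_n -> 'I_n -> 'I_n -> R) (Om : 'I_n -> 'I_n -> R)
  (fh : Hidx p q -> Hidx p q -> Hidx p q -> R)
  (fa : Hidx p q -> 'I_n -> 'I_n -> R) (hf : Hidx p q -> Hidx p q -> R) :
  DE_data fg Om fh fa hf ->
  (forall a b c, fh (inl a) (inl b) (inr c) = 0) ->
  DE_data (@gprime R n q fg) (@gprime_metric R n q Om) (hhat fh) (fa' fa fh) (hf' hf).
Proof.
move=> H sub; have H' := H.
move: H' => [fgL [OmM [fhL [Der [Rep [faO [hs hinv]]]]]]].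
have fhL' := fhL; move: fhL' => [fhA fhJ].
split; first exact: gprime_lie.
split; first exact: gprime_met.
split; first exact: hhat_lie.
split; first exact: fa'_der.
split; first exact: fa'_rep.
split; first exact: fa'_O.
split; first by move=> a b; rewrite /hf' hs.
move=> k i j; rewrite /hhat /hf'; have := hinv (inl k) (inl i) (inl j).
rewrite big_sumType /= [X in _ + X]big1 ?addr0 //.
by move=> l _; rewrite !sub !mul0r !addr0.
Qed.


Definition sigma (n p q : nat) (u : DEidx (gprime_idx n q) 'I_p) : Didx n p q :=
  match u with
  | inl (inl (inl i)) => inl (inl i)
  | inl (inl (inr (inl (inl v)))) => match v with end
  | inl (inl (inr (inl (inr b)))) => inl (inr (inr b))
  | inl (inl (inr (inr b))) => inr (inr b)
  | inl (inr a) => inl (inr (inl a))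
  | inr a => inr (inl a)
  end.

Definition tau (n p q : nat) (z : Didx n p q) : DEidx (gprime_idx n q) 'I_p :=
  match z with
  | inl (inl i) => inl (inl (inl i))
  | inl (inr (inr b)) => inl (inl (inr (inl (inr b))))
  | inr (inr b) => inl (inl (inr (inr b)))
  | inl (inr (inl a)) => inl (inr a)
  | inr (inl a) => inr a
  end.

Lemma sigma_bij n p q : bijective (@sigma n p q).
Proof.
exists (@tau n p q).
- by move=> [[[i|[[[]|b]|b]]|a]|a].
- by move=> [[i|[a|b]]|[a|b]].
Qed.

Lemma iso_br (R : realFieldType) (n p q : nat)
  (fg : 'I_n -> 'I_n -> 'I_n -> R) (Om : 'I_n -> 'I_n -> R)
  (fh : Hidx p q -> Hidx p q -> Hidx p q -> R)
  (fa : Hidx p q -> 'I_n -> 'I_n -> R) :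
  (forall i j k, fh i j k = - fh j i k) ->
  forall u v w, contracted fg Om fh fa (sigma u) (sigma v) (sigma w)
                    = dext (@gprime R n q fg) (@gprime_metric R n q Om) (hhat fh) (fa' fa fh) u v w.
Proof.
move=> fhA.
move=> [[[i|[[[]|b]|b]]|a]|a] [[[j|[[[]|b']|b']]|a']|a'] [[[k|[[[]|c]|c]]|c']|c'];
  rewrite /gprime /gprime_metric /hhat /=; ssum; try done.
all: try lra.
Qed.

Lemma iso_form (R : realFieldType) (n p q : nat)
  (Om : 'I_n -> 'I_n -> R) (hf : Hidx p q -> Hidx p q -> R) :
  forall u v, contracted_form Om hf (sigma u) (sigma v)
                  = dmetric (@gprime_metric R n q Om) (hf' hf) u v.
Proof.
move=> [[[i|[[[]|b]|b]]|a]|a] [[[j|[[[]|b']|b']]|a']|a'] //=.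
Qed.

Lemma transport_lie (R : realFieldType) (I J : finType) (s : J -> I)
  (c : I -> I -> I -> R) (c' : J -> J -> J -> R) :
  bijective s -> (forall u v w, c (s u) (s v) (s w) = c' u v w) ->
  lie_consts c' -> lie_consts c.
Proof.
move=> [t st ts] E [A Jc]; split.
  by move=> i j k; rewrite -(ts i) -(ts j) -(ts k) !E A.
move=> i j l m; rewrite (reindex s); last by exists t => x _.
rewrite -(ts i) -(ts j) -(ts l) -(ts m).
rewrite -[RHS](Jc (t i) (t j) (t l) (t m)); apply: eq_bigr => k _; by rewrite !E.
Qed.

Lemma transport_metric (R : realFieldType) (I J : finType) (s : J -> I)
  (c : I -> I -> I -> R) (c' : J -> J -> J -> R) B B' :
  bijective s -> (forall u v w, c (s u) (s v) (s w) = c' u v w) ->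
  (forall u v, B (s u) (s v) = B' u v) ->
  invariant_metric c' B' -> invariant_metric c B.
Proof.
move=> [t st ts] E EB [S [N I']]; split; [|split].
- by move=> i j; rewrite -(ts i) -(ts j) !EB S.
- move=> x Hx i; rewrite -(ts i); apply: (N (fun u => x (s u))) => j.
  rewrite -[RHS](Hx (s j)) (reindex s); last by exists t => y _.
  by apply: eq_bigr => k _; rewrite EB.
- move=> k i j; rewrite (reindex s); last by exists t => y _.
  rewrite -(ts i) -(ts j) -(ts k) -[RHS](I' (t k) (t i) (t j)).
  by apply: eq_bigr => l _; rewrite !E !EB.
Qed.


Section Lim.
Variable R : realFieldType.

Lemma lim_add (f g : R -> R) L M : lim0plus f L -> lim0plus g M ->
  lim0plus (fun e => f e + g e) (L + M).
Proof.
move=> Hf Hg e e0.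
have e2 : 0 < e / 2 by rewrite divr_gt0.
have [d1 d10 H1] := Hf _ e2; have [d2 d20 H2] := Hg _ e2.
exists (Num.min d1 d2); first by rewrite lt_min d10 d20.
move=> eps ep; rewrite lt_min => /andP [h1 h2].
have := H1 _ ep h1; have := H2 _ ep h2 => A B.
rewrite (_ : f eps + g eps - (L + M) = (f eps - L) + (g eps - M)); last by ring.
apply: le_lt_trans (ler_normD _ _) _.
have -> : e = e / 2 + e / 2 by field.
by rewrite ltrD.
Qed.

Lemma lim_const (L : R) : lim0plus (fun _ => L) L.
Proof. by move=> e e0; exists 1 => // eps _ _; rewrite subrr normr0. Qed.

Lemma lim_ext (f g : R -> R) L : lim0plus f L -> (forall e, 0 < e -> f e = g e) ->
  lim0plus g L.
Proof.
move=> Hf E e e0; have [d d0 H] := Hf e e0; exists d => // eps ep epd.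
by rewrite -E // H.
Qed.

Lemma lim_sum_seq (I : Type) (r : seq I) (F : I -> R -> R) (L : I -> R) :
  (forall i, lim0plus (F i) (L i)) -> lim0plus (fun e => \sum_(i <- r) F i e) (\sum_(i <- r) L i).
Proof.
move=> H; elim: r => [|i r IH].
  rewrite big_nil; apply: lim_ext (lim_const 0) _ => e _; by rewrite big_nil.
rewrite big_cons; apply: lim_ext (lim_add (H i) IH) _ => e _; by rewrite big_cons.
Qed.

Lemma lim_sum (I : finType) (F : I -> R -> R) (L : I -> R) :
  (forall i, lim0plus (F i) (L i)) -> lim0plus (fun e => \sum_i F i e) (\sum_i L i).
Proof. exact: lim_sum_seq. Qed.

Lemma lim_scale (f : R -> R) L a b : lim0plus f L -> lim0plus (fun e => a * f e * b) (a * L * b).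
Proof.
move=> Hf e e0.
have M0 : 0 < (`|a| + 1) * (`|b| + 1) by rewrite mulr_gt0 // ltr_pwDr // normr_ge0.
have [d d0 H] := Hf (e / ((`|a| + 1) * (`|b| + 1))) (divr_gt0 e0 M0).
exists d => // eps ep epd; have := H _ ep epd => h.
rewrite (_ : a * f eps * b - a * L * b = a * (f eps - L) * b); last by ring.
rewrite !normrM.
have : `|a| * `|f eps - L| * `|b| <= (`|a| + 1) * `|f eps - L| * (`|b| + 1).
  apply: ler_pM => //; [by rewrite mulr_ge0 | by apply: ler_wpM2r => //; rewrite lerDl |by rewrite lerDl].
move/le_lt_trans; apply.
have h2 : `|f eps - L| * ((`|a| + 1) * (`|b| + 1)) < e / ((`|a| + 1) * (`|b| + 1)) * ((`|a| + 1) * (`|b| + 1)).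
  by rewrite ltr_pM2r.
rewrite divfK ?gt_eqF // in h2.
by rewrite (_ : (`|a| + 1) * `|f eps - L| * (`|b| + 1) = `|f eps - L| * ((`|a| + 1) * (`|b| + 1))); last ring.
Qed.

Lemma lim_quad (f : R -> R) c a b :
  (forall e, 0 < e -> f e = c + e * a + e ^+ 2 * b) -> lim0plus f c.
Proof.
move=> E e e0.
have M0 : 0 < `|a| + `|b| + 1 by rewrite ltr_pwDr // addr_ge0.
exists (Num.min 1 (e / (`|a| + `|b| + 1))); first by rewrite lt_min ltr01 divr_gt0.
move=> eps ep; rewrite lt_min => /andP [h1 h2].
rewrite E // (_ : c + eps * a + eps ^+ 2 * b - c = eps * (a + eps * b)); last by ring.
rewrite normrM gtr0_norm //.
have hb : `|a + eps * b| <= `|a| + `|b| + 1.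
  apply: le_trans (ler_normD _ _) _; rewrite -addrA lerD2l normrM gtr0_norm //.
  apply: le_trans (_ : `|b| <= _); first by rewrite ler_piMl // ltW.
  by rewrite lerDl.
have : eps * `|a + eps * b| <= eps * (`|a| + `|b| + 1) by rewrite ler_pM2l.
move/le_lt_trans; apply.
by rewrite -ltr_pdivlMr.
Qed.
End Lim.

Lemma lim_S (R : realFieldType) (D C : R) (S : R -> R) (k : nat) :
  (k <= 2)%N ->
  (forall e, 0 < e -> S e = e ^+ k) -> (k = 0%N -> D = C) -> ((0 < k)%N -> C = 0) ->
  lim0plus (fun e => D * S e) C.
Proof.
case: k => [|[|[|k]]] // _ HS H0 Hp.
- apply: lim_ext (lim_const C) _ => e ep; by rewrite HS // expr0 mulr1 H0.
- apply: (@lim_quad _ _ _ D 0) => e ep; rewrite HS // Hp //; ring.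
- apply: (@lim_quad _ _ _ 0 D) => e ep; rewrite HS // Hp //; ring.
Qed.

Lemma lim_zero (R : realFieldType) (D C : R) (S : R -> R) :
  D = 0 -> C = 0 -> lim0plus (fun e => D * S e) C.
Proof. move=> -> ->; apply: lim_ext (lim_const 0) _ => e _; by rewrite mul0r. Qed.


Lemma term_br (R : realFieldType) (n p q : nat)
  (fg : 'I_n -> 'I_n -> 'I_n -> R) (Om : 'I_n -> 'I_n -> R)
  (fh : Hidx p q -> Hidx p q -> Hidx p q -> R)
  (fa : Hidx p q -> 'I_n -> 'I_n -> R) :
  (forall i j k, fh i j k = - fh j i k) ->
  (forall a b c, fh (inl a) (inl b) (inr c) = 0) ->
  forall i j z : Didx n p q,
  lim0plus (fun eps => dext fg Om fh fa i j z * (Tscale eps i * Tscale eps j / Tscale eps z))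
           (contracted fg Om fh fa i j z).
Proof.
move=> fhA sub.
move=> [[i|[a|a]]|[a|a]] [[j|[b|b]]|[b|b]] [[k|[c|c]]|[c|c]].
all: first
  [ solve [apply: lim_zero; rewrite /= ?sub ?oppr0 //]
  | solve [apply: (@lim_S _ _ _ _ 0%N) => //=;
      try (move=> e ep; (have ? : e != 0 by rewrite gt_eqF); field; done);
      try (move=> _; rewrite fhA //) ]
  | solve [apply: (@lim_S _ _ _ _ 1%N) => //=;
      move=> e ep; (have ? : e != 0 by rewrite gt_eqF); field; done]
  | solve [apply: (@lim_S _ _ _ _ 2%N) => //=;
      move=> e ep; (have ? : e != 0 by rewrite gt_eqF); field; done] ].
Qed.

Lemma term_form (R : realFieldType) (n p q : nat)
  (Om : 'I_n -> 'I_n -> R) (hf : Hidx p q -> Hidx p q -> R) :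
  forall i j : Didx n p q,
  lim0plus (fun eps => dmetric Om hf i j * (Tscale eps i * Tscale eps j))
           (contracted_form Om hf i j).
Proof.
move=> [[i|[a|a]]|[a|a]] [[j|[b|b]]|[b|b]].
all: first
  [ solve [apply: lim_zero; rewrite /= ?oppr0 //]
  | solve [apply: (@lim_S _ _ _ _ 0%N) => //=;
      try (move=> e ep; (have ? : e != 0 by rewrite gt_eqF); field; done) ]
  | solve [apply: (@lim_S _ _ _ _ 1%N) => //=;
      move=> e ep; (have ? : e != 0 by rewrite gt_eqF); field; done]
  | solve [apply: (@lim_S _ _ _ _ 2%N) => //=;
      move=> e ep; (have ? : e != 0 by rewrite gt_eqF); field; done] ].
Qed.

Lemma lim_eqL (R : realFieldType) (f : R -> R) L L' : lim0plus f L -> L = L' -> lim0plus f L'.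
Proof. by move=> H <-. Qed.

Lemma main_lim1 (R : realFieldType) (n p q : nat)
  (fg : 'I_n -> 'I_n -> 'I_n -> R) (Om : 'I_n -> 'I_n -> R)
  (fh : Hidx p q -> Hidx p q -> Hidx p q -> R)
  (fa : Hidx p q -> 'I_n -> 'I_n -> R) :
  (forall i j k, fh i j k = - fh j i k) ->
  (forall a b c, fh (inl a) (inl b) (inr c) = 0) ->
  (forall (x y : Didx n p q -> R) (z : Didx n p q),
     lim0plus (fun eps => Tinv eps (br (dext fg Om fh fa) (Tmap eps x) (Tmap eps y)) z)
              (br (contracted fg Om fh fa) x y z)).
Proof.
move=> fhA sub x y z.
have L := lim_sum (fun i => lim_sum (fun j => lim_scale (x i) (y j) (term_br fg Om fa fhA sub i j z))).
apply: lim_eqL.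
  apply: lim_ext L _ => e _.
  rewrite /Tinv /br /Tmap big_distrl; apply: eq_bigr => i _.
  rewrite big_distrl; apply: eq_bigr => j _ /=; ring.
rewrite /br; apply: eq_bigr => i _; apply: eq_bigr => j _; ring.
Qed.

Lemma main_lim2 (R : realFieldType) (n p q : nat)
  (Om : 'I_n -> 'I_n -> R) (hf : Hidx p q -> Hidx p q -> R) :
  (forall x y : Didx n p q -> R,
     lim0plus (fun eps => bilin (dmetric Om hf) (Tmap eps x) (Tmap eps y))
              (bilin (contracted_form Om hf) x y)).
Proof.
move=> x y.
have L := lim_sum (fun i => lim_sum (fun j => lim_scale (x i) (y j) (term_form Om hf i j))).
apply: lim_eqL.
  apply: lim_ext L _ => e _.
  rewrite /bilin /Tmap; apply: eq_bigr => i _; apply: eq_bigr => j _ /=; ring.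
rewrite /bilin; apply: eq_bigr => i _; apply: eq_bigr => j _; ring.
Qed.

Unset Implicit Arguments. Set Strict Implicit.



Theorem theorem5p1 (R : realFieldType) (n p q : nat)
  (fg : 'I_n -> 'I_n -> 'I_n -> R) (Om : 'I_n -> 'I_n -> R)
  (fh : Hidx p q -> Hidx p q -> Hidx p q -> R)
  (fa : Hidx p q -> 'I_n -> 'I_n -> R) (hf : Hidx p q -> Hidx p q -> R) :
  DE_data fg Om fh fa hf ->
  (* hat h is a Lie subalgebra *)
  (forall a b c, fh (inl a) (inl b) (inr c) = 0) ->
  (* the contraction limit exists and has the listed brackets *)
  (forall (x y : Didx n p q -> R) (z : Didx n p q),
     lim0plus (fun eps => Tinv eps (br (dext fg Om fh fa) (Tmap eps x) (Tmap eps y)) z)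
              (br (contracted fg Om fh fa) x y z)) /\
  (* the contracted form is the limit of <T x, T y> *)
  (forall x y : Didx n p q -> R,
     lim0plus (fun eps => bilin (dmetric Om hf) (Tmap eps x) (Tmap eps y))
              (bilin (contracted_form Om hf) x y)) /\
  (* the contracted algebra is a Lie algebra with invariant metric *)
  lie_consts (contracted fg Om fh fa) /\
  invariant_metric (contracted fg Om fh fa) (contracted_form Om hf) /\
  (* ... which is a double extension D(g (+) D(0, check h_T), hat h_T) *)
  (exists (fa' : 'I_p -> gprime_idx n q -> gprime_idx n q -> R)
          (hf' : 'I_p -> 'I_p -> R)
          (sigma : DEidx (gprime_idx n q) 'I_p -> Didx n p q),
     DE_data (gprime fg) (gprime_metric Om) (hhat fh) fa' hf' /\
     bijective sigma /\
     (forall u v w, contracted fg Om fh fa (sigma u) (sigma v) (sigma w)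
                    = dext (gprime fg) (gprime_metric Om) (hhat fh) fa' u v w) /\
     (forall u v, contracted_form Om hf (sigma u) (sigma v)
                  = dmetric (gprime_metric Om) hf' u v)).
Proof.
move=> HD sub.
have HD' := HD; move: HD' => [_ [_ [[fhA _] _]]].
have DEg := DE_g' HD sub.
have Eb := @iso_br R n p q fg Om fh fa fhA.
have Ef := @iso_form R n p q Om hf.
split; first exact: main_lim1.
split; first exact: main_lim2.
split; first exact: transport_lie (sigma_bij n p q) Eb (DE_lie DEg).
split; first exact: transport_metric (sigma_bij n p q) Eb Ef (DE_metric DEg).
exists (fa' fa fh), (hf' hf), (@sigma n p q).
split; first exact: DEg.
split; first exact: sigma_bij.
by split.
Qed.
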